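(* Let $n\ge2$ be an integer, $l_k=\pi k/n$, $S_n=\sum_{k=1}^{n-1}\csc l_k$, $c_k=\cos\frac{\pi(2k-1)}{2n}$, $\sigma_k(\phi)=(1-c_k^2\cos^2\phi)^{1/2}$, and $V(\phi)=\frac{S_n}{4\cos\phi}+\frac14\sum_{k=1}^n\frac{1}{\sigma_k(\phi)}$ for $\phi\in(-\pi/2,\pi/2)$. Then $V$ has exactly three critical points in $(-\pi/2,\pi/2)$, all non-degenerate; they are $-\phi_R,0,\phi_R$ with $\phi_R\in(0,\pi/4)$.
   Context: $V$ is the shape potential, in Devaney-type coordinates $(q_1,q_2)=r(\cos\phi,2\sin\phi)$, of the spatial double-polygon problem ($2n$ unit masses forming two congruent regular $n$-gons in parallel horizontal planes, centered on the $z$-axis and twisted relative to each other). *)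

(* Defs.v *)
From Stdlib Require Import Reals Lra.
From Coquelicot Require Import Coquelicot.
Open Scope R_scope.

Definition lk (n k : nat) : R := PI * INR k / INR n.

Definition Sn (n : nat) : R := sum_n_m (fun k => / sin (lk n k)) 1 (n - 1).

Definition ck (n k : nat) : R := cos (PI * (2 * INR k - 1) / (2 * INR n)).

Definition sigmak (n k : nat) (phi : R) : R := sqrt (1 - (ck n k)^2 * (cos phi)^2).

Definition V (n : nat) (phi : R) : R :=
  Sn n / (4 * cos phi) + / 4 * sum_n_m (fun k => / sigmak n k phi) 1 n.

Definition critical_point (f : R -> R) (phi : R) : Prop := is_derive f phi 0.

Definition nondegenerate (f : R -> R) (phi : R) : Prop :=
  exists l : R, is_derive (Derive f) phi l /\ l <> 0.

(* Main.v *)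
Require Import Defs.
From Stdlib Require Import Reals Lra Lia Arith.
From Coquelicot Require Import Coquelicot.
Open Scope R_scope.

Lemma is_derive_val (f : R -> R) (x l l' : R) : is_derive f x l -> l = l' -> is_derive f x l'.
Proof. intros H <-; exact H. Qed.

Lemma cos2_le1 x : cos x ^ 2 <= 1.
Proof. pose proof (sin2_cos2 x). unfold Rsqr in H. nra. Qed.

Lemma r_deriv (a x : R) : 0 <= a < 1 ->
  is_derive (fun y => / sqrt (1 - a * cos y ^ 2)) x
    (- (cos x * sin x) * (a * (/ sqrt (1 - a * cos x ^ 2)) ^ 3)).
Proof.
  intros Ha.
  assert (hw : 0 < 1 - a * cos x ^ 2) by (pose proof (cos2_le1 x); pose proof (pow2_ge_0 (cos x)); nra).
  assert (hd1 : is_derive (fun y => 1 - a * cos y ^ 2) x (2 * a * cos x * sin x)).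
  { auto_derive; [easy|ring]. }
  pose proof (is_derive_sqrt _ _ _ hd1 hw) as hd2.
  pose proof (sqrt_lt_R0 _ hw) as hq.
  pose proof (is_derive_inv _ _ _ hd2 (Rgt_not_eq _ _ hq)) as hd3.
  eapply is_derive_val; [exact hd3|].
  set (q := sqrt (1 - a * cos x ^ 2)) in *. field. lra.
Qed.

Lemma is_derive_sum (f : nat -> R -> R) (df : nat -> R) (m : nat) (x : R) :
  forall p, (forall k, (m <= k <= p)%nat -> is_derive (f k) x (df k)) ->
  is_derive (fun y => sum_n_m (fun k => f k y) m p) x (sum_n_m df m p).
Proof.
  induction p; intros H.
  - destruct m.
    + rewrite sum_n_n. apply is_derive_ext with (f 0%nat).
      { intros t. now rewrite sum_n_n. }
      apply H. lia.
    + rewrite sum_n_m_zero by lia.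
      apply is_derive_ext with (fun _ => zero).
      { intros t. now rewrite sum_n_m_zero by lia. }
      apply (@is_derive_const R_AbsRing R_NormedModule).
  - destruct (le_lt_dec m (S p)) as [h|h].
    + destruct (Nat.eq_dec m (S p)) as [e|e].
      * subst m. rewrite sum_n_n. apply is_derive_ext with (f (S p)).
        { intros t. now rewrite sum_n_n. }
        apply H. lia.
      * rewrite sum_n_Sm by lia.
        apply is_derive_ext with (fun y => plus (sum_n_m (fun k => f k y) m p) (f (S p) y)).
        { intros t. now rewrite sum_n_Sm by lia. }
        apply (@is_derive_plus R_AbsRing R_NormedModule).
        -- apply IHp. intros k hk. apply H. lia.
        -- apply H. lia.
    + rewrite sum_n_m_zero by lia.
      apply is_derive_ext with (fun _ => zero).
      { intros t. now rewrite sum_n_m_zero by lia. }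
      apply (@is_derive_const R_AbsRing R_NormedModule).
Qed.
Lemma PI_lt : PI < 32/10.
Proof.
  destruct (Rlt_or_le PI (32/10)) as [h|h]; [exact h|].
  exfalso. pose proof (SIN (32/10) ltac:(lra) h) as [_ hs].
  pose proof (sin_ge_0 (32/10) ltac:(lra) h).
  unfold sin_ub, sin_approx in hs. simpl in hs. unfold sum_f_R0 in hs. simpl in hs.
  unfold sin_term in hs. cbn [Nat.mul Nat.add] in hs.
  rewrite !fact_simpl, !mult_INR in hs. simpl Factorial.fact in hs. simpl INR in hs.
  cbn [pow] in hs. lra.
Qed.

Lemma dplus (f g : R -> R) (x a b : R) : is_derive f x a -> is_derive g x b ->
  is_derive (fun y => f y + g y) x (a + b).
Proof. intros; apply (@is_derive_plus R_AbsRing R_NormedModule); auto. Qed.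
Lemma dminus (f g : R -> R) (x a b : R) : is_derive f x a -> is_derive g x b ->
  is_derive (fun y => f y - g y) x (a - b).
Proof. intros; apply (@is_derive_minus R_AbsRing R_NormedModule); auto. Qed.

Lemma sum_mult_l (c : R) (u : nat -> R) m p :
  sum_n_m (fun k => c * u k) m p = c * sum_n_m u m p.
Proof. exact (sum_n_m_mult_l c u m p). Qed.

Definition a (n k : nat) : R := ck n k ^ 2.
Definition r (n k : nat) (y : R) : R := / sigmak n k y.
Definition Q (n : nat) (y : R) : R := sum_n_m (fun k => a n k * r n k y ^ 3) 1 n.
Definition P (n : nat) (y : R) : R := sum_n_m (fun k => a n k ^ 2 * r n k y ^ 5) 1 n.
Definition K (n : nat) (y : R) : R := / 4 * (Sn n / cos y ^ 2 - cos y * Q n y).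
Definition M (n : nat) (y : R) : R := / 4 * (2 * Sn n / cos y ^ 3 + Q n y + 3 * cos y ^ 2 * P n y).

Lemma r_d n k x : 0 <= a n k < 1 ->
  is_derive (r n k) x (- (cos x * sin x) * (a n k * r n k x ^ 3)).
Proof. intros H. unfold r, sigmak. apply r_deriv. exact H. Qed.

Lemma V_d n x (ha : forall k, (1 <= k <= n)%nat -> 0 <= a n k < 1) :
  - (PI/2) < x < PI/2 -> is_derive (V n) x (sin x * K n x).
Proof.
  intros hx. pose proof (cos_gt_0 x (proj1 hx) (proj2 hx)) as hc.
  assert (h1 : is_derive (fun y => Sn n / (4 * cos y)) x (Sn n * sin x / (4 * cos x ^ 2))).
  { auto_derive. lra. field. lra. }
  assert (h2 : is_derive (fun y => sum_n_m (fun k => r n k y) 1 n) x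
     (sum_n_m (fun k => - (cos x * sin x) * (a n k * r n k x ^ 3)) 1 n)).
  { apply is_derive_sum. intros k hk. apply r_d. auto. }
  pose proof (is_derive_scal _ _ (/4) _ h2) as h3.
  pose proof (dplus _ _ _ _ _ h1 h3) as h4.
  eapply is_derive_val; [exact h4|].
  rewrite sum_mult_l. unfold K, Q. field. lra.
Qed.

Lemma K_d n x (ha : forall k, (1 <= k <= n)%nat -> 0 <= a n k < 1) :
  - (PI/2) < x < PI/2 -> is_derive (K n) x (sin x * M n x).
Proof.
  intros hx. pose proof (cos_gt_0 x (proj1 hx) (proj2 hx)) as hc.
  assert (h1 : is_derive (fun y => Sn n / cos y ^ 2) x (2 * Sn n * sin x / cos x ^ 3)).
  { auto_derive. { intro; nra. } field. lra. }
  assert (h2 : is_derive (Q n) x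
     (sum_n_m (fun k => - (3 * cos x * sin x) * (a n k ^ 2 * r n k x ^ 5)) 1 n)).
  { apply is_derive_sum. intros k hk.
    pose proof (is_derive_pow _ 3 _ _ (r_d n k x (ha k hk))) as hp.
    pose proof (is_derive_scal _ _ (a n k) _ hp) as hs.
    eapply is_derive_val; [exact hs|]. simpl. ring. }
  pose proof (Derive.is_derive_mult _ _ _ _ _ (is_derive_cos x) h2) as h3.
  pose proof (dminus _ _ _ _ _ h1 h3) as h4.
  pose proof (is_derive_scal _ _ (/4) _ h4) as h5.
  eapply is_derive_val; [exact h5|].
  rewrite sum_mult_l. unfold M, P. field. lra.
Qed.

Lemma sum_le_loc (f g : nat -> R) (m : nat) :
  forall p, (forall k, (m <= k <= p)%nat -> f k <= g k) -> sum_n_m f m p <= sum_n_m g m p.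
Proof.
  induction p; intros H.
  - destruct m.
    + rewrite !sum_n_n. apply H. lia.
    + rewrite !sum_n_m_zero by lia. apply Rle_refl.
  - destruct (le_lt_dec m (S p)) as [h|h].
    + destruct (Nat.eq_dec m (S p)) as [e|e].
      * subst m. rewrite !sum_n_n. apply H. lia.
      * rewrite !sum_n_Sm by lia. apply Rplus_le_compat.
        -- apply IHp. intros k hk. apply H. lia.
        -- apply H. lia.
    + rewrite !sum_n_m_zero by lia. apply Rle_refl.
Qed.

Lemma sum_lt_first (f g : nat -> R) (m p : nat) : (m <= p)%nat ->
  (forall k, (m <= k <= p)%nat -> f k <= g k) -> f m < g m ->
  sum_n_m f m p < sum_n_m g m p.
Proof.
  intros hmp H h. rewrite !(sum_Sn_m _ m p) by lia.
  apply Rplus_lt_le_compat; [exact h|].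
  apply sum_le_loc. intros k hk. apply H. lia.
Qed.

Lemma sum_nonneg (f : nat -> R) (m p : nat) :
  (forall k, (m <= k <= p)%nat -> 0 <= f k) -> 0 <= sum_n_m f m p.
Proof.
  intros H. replace 0 with (sum_n_m (fun _ => 0) m p).
  - apply sum_le_loc. exact H.
  - rewrite sum_n_m_const. apply Rmult_0_r.
Qed.

Lemma tele (f : nat -> R) m :
  sum_n_m (fun k => f k - f (pred k)) 1 m = f m - f 0%nat.
Proof.
  induction m.
  - rewrite sum_n_m_zero by lia. simpl. unfold zero; simpl. ring.
  - rewrite sum_n_Sm by lia. rewrite IHm. simpl. unfold plus; simpl. ring.
Qed.

Lemma INR_pos n : (1 <= n)%nat -> 1 <= INR n.
Proof. intros h. apply (le_INR 1) in h. simpl in h. exact h. Qed.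

Lemma theta_bounds n k : (1 <= k <= n)%nat ->
  0 < PI * (2 * INR k - 1) / (2 * INR n) < PI.
Proof.
  intros [h1 h2]. pose proof (INR_pos k h1) as hk. apply le_INR in h2.
  pose proof PI_RGT_0.
  set (t := (2 * INR k - 1) / (2 * INR n)).
  assert (ht : t * (2 * INR n) = 2 * INR k - 1) by (unfold t; field; lra).
  replace (PI * (2 * INR k - 1) / (2 * INR n)) with (PI * t) by (unfold t, Rdiv; ring).
  assert (0 < t < 1) by nra. nra.
Qed.

Lemma a_bounds n k : (1 <= k <= n)%nat -> 0 <= a n k < 1.
Proof.
  intros h. pose proof (theta_bounds n k h) as [h1 h2].
  pose proof (sin_gt_0 _ h1 h2) as hs.
  pose proof (sin2_cos2 (PI * (2 * INR k - 1) / (2 * INR n))) as e.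
  unfold a, ck. unfold Rsqr in e. split. nra. nra.
Qed.

Lemma a1_pos n : (2 <= n)%nat -> 0 < a n 1.
Proof.
  intros h. pose proof (INR_pos n ltac:(lia)) as hn.
  assert (h2 : 2 <= INR n) by (apply (le_INR 2) in h; simpl in h; lra).
  pose proof PI_RGT_0.
  unfold a, ck. simpl INR.
  replace (PI * (2 * 1 - 1) / (2 * INR n)) with (PI / (2 * INR n)) by (field; lra).
  assert (0 < PI / (2 * INR n) < PI / 2).
  { split. apply Rdiv_lt_0_compat; lra.
    unfold Rdiv. apply Rmult_lt_compat_l. lra. apply Rinv_lt_contravar; nra. }
  pose proof (cos_gt_0 (PI / (2 * INR n)) ltac:(lra) ltac:(lra)). nra.
Qed.

Lemma lk_bounds n k : (1 <= k <= n - 1)%nat ->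
  PI / INR n <= lk n k /\ PI - lk n k >= PI / INR n /\ 0 < lk n k < PI.
Proof.
  intros [h1 h2]. pose proof (INR_pos k h1) as hk.
  assert (h3 : (k + 1 <= n)%nat) by lia. apply le_INR in h3. rewrite plus_INR in h3. simpl in h3.
  pose proof PI_RGT_0.
  unfold lk. set (i := / INR n).
  assert (hi : i * INR n = 1) by (unfold i; field; lra).
  assert (0 < i) by (unfold i; apply Rinv_0_lt_compat; lra).
  unfold Rdiv. fold i.
  assert (hpi : 0 < PI * i) by nra.
  assert (PI * i <= PI * INR k * i) by nra.
  assert (PI * INR k * i + PI * i <= PI).
  { replace PI with (PI * i * INR n) at 3 by (rewrite Rmult_assoc, hi; ring). nra. }
  repeat split; nra.
Qed.

Lemma Sn_ge n : (2 <= n)%nat -> INR n - 1 <= Sn n.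
Proof.
  intros h. unfold Sn.
  apply Rle_trans with (sum_n_m (fun _ => 1) 1 (n - 1)).
  - rewrite sum_n_m_const. replace (S (n - 1) - 1)%nat with (n - 1)%nat by lia.
    rewrite minus_INR by lia. simpl. lra.
  - apply sum_le_loc. intros k hk. destruct (lk_bounds n k hk) as [_ [_ [l1 l2]]].
    pose proof (sin_gt_0 _ l1 l2). pose proof (SIN_bound (lk n k)) as [_ hs].
    rewrite <- Rinv_1. apply Rinv_le_contravar; lra.
Qed.

Lemma Sn_le n : (2 <= n)%nat -> Sn n <= (INR n - 1) / sin (PI / INR n).
Proof.
  intros h. unfold Sn. pose proof (INR_pos n ltac:(lia)) as hn.
  assert (h2 : 2 <= INR n) by (apply (le_INR 2) in h; simpl in h; lra).
  pose proof PI_RGT_0.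
  assert (hpn : 0 < PI / INR n <= PI / 2).
  { split. apply Rdiv_lt_0_compat; lra.
    unfold Rdiv. apply Rmult_le_compat_l. lra. apply Rinv_le_contravar; lra. }
  pose proof (sin_gt_0 (PI / INR n) ltac:(lra) ltac:(lra)) as hsp.
  apply Rle_trans with (sum_n_m (fun _ => / sin (PI / INR n)) 1 (n - 1)).
  - apply sum_le_loc. intros k hk. destruct (lk_bounds n k hk) as [b1 [b2 [l1 l2]]].
    apply Rinv_le_contravar; [exact hsp|].
    destruct (Rle_or_lt (lk n k) (PI / 2)) as [c|c].
    + apply sin_incr_1; lra.
    + rewrite <- (sin_PI_x (lk n k)). apply sin_incr_1; lra.
  - rewrite sum_n_m_const. replace (S (n - 1) - 1)%nat with (n - 1)%nat by lia.
    rewrite minus_INR by lia. simpl. unfold Rdiv. lra.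
Qed.

Lemma sum_plusR (u v : nat -> R) m p :
  sum_n_m (fun k => u k + v k) m p = sum_n_m u m p + sum_n_m v m p.
Proof. exact (sum_n_m_plus u v m p). Qed.

Lemma sum_extR (u v : nat -> R) m p :
  (forall k, (m <= k <= p)%nat -> u k = v k) -> sum_n_m u m p = sum_n_m v m p.
Proof. exact (sum_n_m_ext_loc u v m p). Qed.

Lemma sum_cos n : (2 <= n)%nat ->
  sum_n_m (fun k => cos (PI * (2 * INR k - 1) / INR n)) 1 n = 0.
Proof.
  intros h. pose proof (INR_pos n ltac:(lia)) as hn.
  assert (h2 : 2 <= INR n) by (apply (le_INR 2) in h; simpl in h; lra).
  pose proof PI_RGT_0.
  assert (hpn : 0 < PI / INR n < PI).
  { split. apply Rdiv_lt_0_compat; lra.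
    apply Rmult_lt_reg_r with (INR n). lra. field_simplify; nra. }
  pose proof (sin_gt_0 _ (proj1 hpn) (proj2 hpn)) as hs.
  set (f := fun j : nat => sin (2 * PI * INR j / INR n)).
  assert (e : sum_n_m (fun k => f k - f (pred k)) 1 n =
              2 * sin (PI / INR n) * sum_n_m (fun k => cos (PI * (2 * INR k - 1) / INR n)) 1 n).
  { rewrite <- sum_mult_l. apply sum_extR. intros k hk.
    unfold f. replace (INR (pred k)) with (INR k - 1).
    2:{ rewrite <- Nat.sub_1_r, minus_INR by lia. reflexivity. }
    replace (2 * PI * INR k / INR n) with (PI * (2 * INR k - 1) / INR n + PI / INR n) by (field; lra).
    replace (2 * PI * (INR k - 1) / INR n) with (PI * (2 * INR k - 1) / INR n - PI / INR n) by (field; lra).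
    rewrite sin_plus, sin_minus. ring. }
  rewrite tele in e. unfold f in e.
  replace (2 * PI * INR n / INR n) with (2 * PI) in e by (field; lra).
  simpl INR in e. replace (2 * PI * 0 / INR n) with 0 in e by (field; lra).
  rewrite sin_2PI, sin_0 in e.
  assert (0 < 2 * sin (PI / INR n)) by lra.
  apply Rmult_eq_reg_l with (2 * sin (PI / INR n)); lra.
Qed.

Lemma sum_a n : (2 <= n)%nat -> sum_n_m (fun k => a n k) 1 n = INR n / 2.
Proof.
  intros h. pose proof (INR_pos n ltac:(lia)) as hn.
  rewrite (sum_extR _ (fun k => / 2 + / 2 * cos (PI * (2 * INR k - 1) / INR n))).
  - rewrite sum_plusR, sum_mult_l, sum_cos by exact h. rewrite sum_n_m_const.
    replace (S n - 1)%nat with n by lia. change (@eq R (INR n * / 2 + / 2 * 0) (INR n / 2)). field.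
  - intros k hk. unfold a, ck.
    replace (PI * (2 * INR k - 1) / INR n) with (2 * (PI * (2 * INR k - 1) / (2 * INR n))) by (field; lra).
    rewrite cos_2a_cos. field.
Qed.

Lemma r_pos n k y : (1 <= k <= n)%nat -> 0 < r n k y.
Proof.
  intros h. pose proof (a_bounds n k h) as ha. unfold r, sigmak. fold (a n k).
  apply Rinv_0_lt_compat, sqrt_lt_R0.
  pose proof (cos2_le1 y). pose proof (pow2_ge_0 (cos y)). nra.
Qed.

Lemma Q_nonneg n y : 0 <= Q n y.
Proof.
  unfold Q. apply sum_nonneg. intros k hk. pose proof (a_bounds n k hk).
  pose proof (r_pos n k y hk). apply Rmult_le_pos. lra. apply pow_le. lra.
Qed.

Lemma P_nonneg n y : 0 <= P n y.
Proof.
  unfold P. apply sum_nonneg. intros k hk. pose proof (a_bounds n k hk).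
  pose proof (r_pos n k y hk). apply Rmult_le_pos. apply pow2_ge_0. apply pow_le. lra.
Qed.

Lemma Sn_pos n : (2 <= n)%nat -> 0 < Sn n.
Proof. intros h. pose proof (Sn_ge n h). assert (h2 : 2 <= INR n) by (apply (le_INR 2) in h; simpl in h; lra). lra. Qed.

Lemma M_pos n y : (2 <= n)%nat -> - (PI/2) < y < PI/2 -> 0 < M n y.
Proof.
  intros h hy. pose proof (cos_gt_0 y (proj1 hy) (proj2 hy)) as hc.
  pose proof (Q_nonneg n y). pose proof (P_nonneg n y). pose proof (Sn_pos n h).
  unfold M. assert (0 < 2 * Sn n / cos y ^ 3).
  { apply Rdiv_lt_0_compat. lra. apply pow_lt. lra. }
  assert (0 <= 3 * cos y ^ 2 * P n y).
  { apply Rmult_le_pos. pose proof (pow2_ge_0 (cos y)). lra. lra. }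
  lra.
Qed.

Lemma cos_PI4_sq : cos (PI/4) ^ 2 = 1/2.
Proof.
  rewrite cos_PI4. pose proof (sqrt_sqrt 2 ltac:(lra)). pose proof (sqrt_lt_R0 2 ltac:(lra)).
  field_simplify. rewrite pow2_sqrt by lra. field. lra.
Qed.

Lemma K0_neg n : (2 <= n)%nat -> K n 0 < 0.
Proof.
  intros h. pose proof (INR_pos n ltac:(lia)) as hn.
  assert (h2 : 2 <= INR n) by (apply (le_INR 2) in h; simpl in h; lra).
  pose proof PI_RGT_0. pose proof PI_lt.
  set (th := PI / (2 * INR n)).
  assert (hth : th * (2 * INR n) = PI) by (unfold th; field; lra).
  assert (hth0 : 0 < th) by (unfold th; apply Rdiv_lt_0_compat; lra).
  assert (hth4 : th <= PI / 4) by nra.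
  set (s := sin th). set (c := cos th).
  assert (hs : 0 < s) by (apply sin_gt_0; lra).
  assert (hsth : s < th) by (apply sin_lt_x; lra).
  assert (hc : 0 < c) by (apply cos_gt_0; lra).
  assert (hc2 : 1/2 <= c ^ 2).
  { assert (cos (PI/4) <= c) by (apply cos_decr_1; lra).
    pose proof cos_PI4_sq. assert (0 < cos (PI/4)) by (apply cos_gt_0; lra). nra. }
  assert (hc7 : 7/10 <= c) by nra.
  assert (hsc : s ^ 2 + c ^ 2 = 1) by (pose proof (sin2_cos2 th) as e; unfold Rsqr in e; fold s c in e; nra).
  pose proof (Sn_le n h) as hS.
  replace (PI / INR n) with (2 * th) in hS by (unfold th; field; lra).
  rewrite sin_2a in hS. fold s c in hS.
  assert (hQ : c ^ 2 / s ^ 3 <= Q n 0).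
  { unfold Q. rewrite (sum_Sn_m _ 1 n) by lia.
    change (c ^ 2 / s ^ 3 <= a n 1 * r n 1 0 ^ 3 + sum_n_m (fun k => a n k * r n k 0 ^ 3) 2 n).
    assert (0 <= sum_n_m (fun k => a n k * r n k 0 ^ 3) 2 n).
    { apply sum_nonneg. intros k hk. pose proof (a_bounds n k ltac:(lia)).
      pose proof (r_pos n k 0 ltac:(lia)). apply Rmult_le_pos. lra. apply pow_le. lra. }
    assert (ea : a n 1 = c ^ 2).
    { unfold a, ck, c, th. simpl INR. f_equal. f_equal. field. lra. }
    assert (er : r n 1 0 = / s).
    { unfold r, sigmak. fold (a n 1). rewrite ea, cos_0.
      replace (1 - c ^ 2 * 1 ^ 2) with (s ^ 2) by nra. rewrite sqrt_pow2 by lra. reflexivity. }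
    rewrite ea, er. replace (c ^ 2 * (/ s) ^ 3) with (c ^ 2 / s ^ 3) by (field; lra). lra. }
  assert (key : (INR n - 1) * s ^ 2 < 2 * c ^ 3).
  { assert ((INR n - 1) * s ^ 2 <= (INR n - 1) * th ^ 2).
    { apply Rmult_le_compat_l. lra. nra. }
    assert (16 * ((INR n - 1) * th ^ 2) <= PI ^ 2).
    { replace (PI ^ 2) with ((th * (2 * INR n)) ^ 2) by (rewrite hth; reflexivity).
      assert (0 <= th ^ 2) by nra. nra. }
    assert (2 * c ^ 3 >= 7/10) by nra. nra. }
  assert (hSQ : Sn n < Q n 0).
  { apply Rle_lt_trans with ((INR n - 1) / (2 * s * c)); [exact hS|].
    apply Rlt_le_trans with (c ^ 2 / s ^ 3); [|exact hQ].
    assert (0 < s ^ 3) by (apply pow_lt; lra).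
    apply Rmult_lt_reg_r with (2 * s ^ 3 * c). nra.
    replace ((INR n - 1) / (2 * s * c) * (2 * s ^ 3 * c)) with ((INR n - 1) * s ^ 2) by (field; lra).
    replace (c ^ 2 / s ^ 3 * (2 * s ^ 3 * c)) with (2 * c ^ 3) by (field; lra). exact key. }
  unfold K. rewrite cos_0. lra.
Qed.

Lemma term_pi4 n k : (1 <= k <= n)%nat ->
  cos (PI/4) * (a n k * r n k (PI/4) ^ 3) <= 2 * a n k /\
  (0 < a n k -> cos (PI/4) * (a n k * r n k (PI/4) ^ 3) < 2 * a n k).
Proof.
  intros hk. pose proof (a_bounds n k hk) as ha.
  pose proof PI_RGT_0.
  set (u := cos (PI/4)). assert (hu : 0 < u) by (apply cos_gt_0; lra).
  pose proof cos_PI4_sq as hu2. fold u in hu2.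
  unfold r, sigmak. fold (a n k). fold u.
  set (w := 1 - a n k * u ^ 2).
  assert (hw : 1/2 < w) by (unfold w; rewrite hu2; lra).
  set (q := sqrt w). assert (hq : 0 < q) by (apply sqrt_lt_R0; lra).
  assert (hq2 : q ^ 2 = w) by (apply pow2_sqrt; lra).
  assert (hqu : u < q) by nra.
  assert (h2q : u < 2 * q ^ 3).
  { assert (u * u < q * q) by nra. assert (u ^ 3 < q ^ 3) by (simpl; nra). nra. }
  set (z := / q). assert (hz : z * q = 1) by (unfold z; field; lra).
  assert (hz0 : 0 < z) by (unfold z; apply Rinv_0_lt_compat; lra).
  assert (hz3 : 0 < z ^ 3) by (apply pow_lt; lra).
  assert (e : 2 * a n k = 2 * q ^ 3 * (a n k * z ^ 3)).
  { replace (2 * q ^ 3 * (a n k * z ^ 3)) with (2 * a n k * (z * q) ^ 3) by ring. rewrite hz. ring. }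
  split.
  - rewrite e. apply Rmult_le_compat_r. apply Rmult_le_pos; lra. lra.
  - intros hap. rewrite e. apply Rmult_lt_compat_r. apply Rmult_lt_0_compat; lra. lra.
Qed.

Lemma Kpi4_pos n : (2 <= n)%nat -> 0 < K n (PI/4).
Proof.
  intros h. pose proof (INR_pos n ltac:(lia)) as hn.
  assert (h2 : 2 <= INR n) by (apply (le_INR 2) in h; simpl in h; lra).
  pose proof PI_RGT_0.
  pose proof cos_PI4_sq as hu2. assert (hu : 0 < cos (PI/4)) by (apply cos_gt_0; lra).
  assert (hQ : cos (PI/4) * Q n (PI/4) < INR n).
  { unfold Q. rewrite <- sum_mult_l.
    replace (INR n) with (sum_n_m (fun k => 2 * a n k) 1 n).
    2:{ rewrite sum_mult_l, sum_a by exact h. change (@eq R (2 * (INR n / 2)) (INR n)). field. }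
    apply sum_lt_first. lia.
    - intros k hk. apply (term_pi4 n k hk).
    - apply (term_pi4 n 1 ltac:(lia)). apply a1_pos. exact h. }
  pose proof (Sn_ge n h).
  unfold K. rewrite hu2. 
  replace (Sn n / (1/2)) with (2 * Sn n) by field. lra.
Qed.

Lemma K_even n y : K n (- y) = K n y.
Proof.
  unfold K. rewrite cos_neg. replace (Q n (- y)) with (Q n y). reflexivity.
  unfold Q. apply sum_extR. intros k hk. unfold r, sigmak. rewrite cos_neg. reflexivity.
Qed.

Lemma K_cont n x : - (PI/2) < x < PI/2 -> continuity_pt (K n) x.
Proof.
  intros hx. apply continuity_pt_filterlim. apply (@ex_derive_continuous R_AbsRing R_NormedModule).
  exists (sin x * M n x). apply K_d; [|exact hx]. intros k hk. apply a_bounds. exact hk.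
Qed.

Lemma K_incr n x1 x2 : (2 <= n)%nat -> 0 < x1 -> x1 < x2 -> x2 < PI/2 -> K n x1 < K n x2.
Proof.
  intros h h1 h12 h2. pose proof PI_RGT_0.
  destruct (MVT_gen (K n) x1 x2 (fun t => sin t * M n t)) as [c [hc e]].
  - rewrite Rmin_left, Rmax_right by lra. intros x hx. apply K_d.
    intros k hk. apply a_bounds. exact hk. lra.
  - rewrite Rmin_left, Rmax_right by lra. intros x hx. apply K_cont. lra.
  - rewrite Rmin_left, Rmax_right in hc by lra.
    assert (0 < sin c) by (apply sin_gt_0; lra).
    assert (0 < M n c) by (apply M_pos; [exact h|lra]).
    assert (0 < sin c * M n c * (x2 - x1)) by (apply Rmult_lt_0_compat; [apply Rmult_lt_0_compat|]; lra).
    lra.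
Qed.

Lemma K_zero_unique n y z : (2 <= n)%nat -> 0 < y < PI/2 -> 0 < z < PI/2 ->
  K n y = 0 -> K n z = 0 -> y = z.
Proof.
  intros h hy hz ey ez. destruct (Rtotal_order y z) as [c|[c|c]]; [|exact c|].
  - pose proof (K_incr n y z h ltac:(lra) c ltac:(lra)). lra.
  - pose proof (K_incr n z y h ltac:(lra) c ltac:(lra)). lra.
Qed.

Lemma DV_d n x : - (PI/2) < x < PI/2 ->
  is_derive (Derive (V n)) x (cos x * K n x + sin x * (sin x * M n x)).
Proof.
  intros hx.
  assert (ha : forall k, (1 <= k <= n)%nat -> 0 <= a n k < 1) by (intros; apply a_bounds; auto).
  apply is_derive_ext_loc with (fun y => sin y * K n y).
  - apply (locally_interval _ x (- (PI/2)) (PI/2)); simpl; try lra.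
    intros y hy1 hy2. symmetry. apply is_derive_unique. apply V_d; [exact ha|lra].
  - exact (Derive.is_derive_mult _ _ _ _ _ (is_derive_sin x) (K_d n x ha hx)).
Qed.

Lemma sin_zero_iff x : - (PI/2) < x < PI/2 -> sin x = 0 -> x = 0.
Proof.
  intros hx e. pose proof PI_RGT_0. destruct (Rtotal_order x 0) as [c|[c|c]]; [|exact c|].
  - pose proof (sin_lt_0_var x ltac:(lra) c). lra.
  - pose proof (sin_gt_0 x c ltac:(lra)). lra.
Qed.

Theorem lemma5p3 (n : nat) (hn : (2 <= n)%nat) :
  exists phiR : R,
    0 < phiR < PI / 4 /\
    (forall phi : R, - (PI / 2) < phi < PI / 2 ->
       (critical_point (V n) phi <-> (phi = - phiR \/ phi = 0 \/ phi = phiR))) /\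
    nondegenerate (V n) (- phiR) /\ nondegenerate (V n) 0 /\ nondegenerate (V n) phiR.
Proof.
  pose proof PI_RGT_0.
  assert (ha : forall k, (1 <= k <= n)%nat -> 0 <= a n k < 1) by (intros; apply a_bounds; auto).
  pose proof (K0_neg n hn) as hK0. pose proof (Kpi4_pos n hn) as hK4.
  destruct (Ranalysis5.IVT_interv (K n) 0 (PI/4)) as [z [hz hKz]].
  { intros x hx. apply K_cont. lra. }
  { lra. } { exact hK0. } { exact hK4. }
  assert (hz0 : z <> 0) by (intro e; rewrite e in hKz; lra).
  assert (hz4 : z <> PI/4) by (intro e; rewrite e in hKz; lra).
  assert (hzb : 0 < z < PI/4) by lra.
  exists z. split; [exact hzb|].
  assert (hKmz : K n (- z) = 0) by (rewrite K_even; exact hKz).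
  split.
  { intros phi hphi. unfold critical_point. pose proof (V_d n phi ha hphi) as hd. split.
    - intros h0. pose proof (is_derive_unique _ _ _ h0) as e1.
      pose proof (is_derive_unique _ _ _ hd) as e2. rewrite e1 in e2.
      symmetry in e2. destruct (Rmult_integral _ _ e2) as [es|eK].
      + right; left. apply sin_zero_iff; assumption.
      + destruct (Rtotal_order phi 0) as [c|[c|c]].
        * left. assert (- phi = z).
          { apply (K_zero_unique n); try lra; try exact hn. rewrite K_even. exact eK. }
          lra.
        * right; left; exact c.
        * right; right. apply (K_zero_unique n); try lra; assumption.
    - intros hdisj. eapply is_derive_val; [exact hd|].
      destruct hdisj as [e|[e|e]]; rewrite e.
      + rewrite hKmz. ring.
      + rewrite sin_0. ring.
      + rewrite hKz. ring. }
  assert (hs : 0 < sin z) by (apply sin_gt_0; lra).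
  assert (hM : 0 < M n z) by (apply M_pos; [exact hn|lra]).
  assert (hMm : 0 < M n (- z)) by (apply M_pos; [exact hn|lra]).
  split; [|split].
  - eexists. split. apply DV_d. lra.
    rewrite hKmz, sin_neg. assert (0 < sin z * sin z * M n (-z)) by (apply Rmult_lt_0_compat; nra).
    nra.
  - eexists. split. apply DV_d. lra.
    rewrite cos_0, sin_0. lra.
  - eexists. split. apply DV_d. lra.
    rewrite hKz. assert (0 < sin z * sin z * M n z) by (apply Rmult_lt_0_compat; nra).
    nra.
Qed.
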